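(* Let $\overline\eta\in(-\frac{\pi}{2},\frac{\pi}{2})^m$ and $\overline V\in\mathbb{R}^n_{>0}$ satisfy $E(\overline\eta)\overline V=\overline E_{fd}$ and condition $(\ast)$ below. Consider the system \[ \dot\eta=v,\qquad T\dot V=-E(\eta)V+\overline E_{fd},\qquad \lambda=\Gamma(V)\boldsymbol{\sin}(\eta), \] with input $v\in\mathbb{R}^m$ and output $\lambda\in\mathbb{R}^m$, and let $\overline v=\mathbf{0}$, $\overline\lambda=\Gamma(\overline V)\boldsymbol{\sin}(\overline\eta)$. Then $W_2$ (defined below) is positive definite in a neighbourhood of $(\overline\eta,\overline V)$ and satisfies along solutions \[ \dot W_2=-(\nabla_VW_2)^TT^{-1}\nabla_VW_2+(\lambda-\overline\lambda)^T(v-\overline v), \] i.e. the system is incrementally passive with respect to the constant equilibrium $(\overline\eta,\overline V)$.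
   Context: Standing setup (power network model). $\mathcal{G}=(\mathcal{V},\mathcal{E})$ is a connected undirected graph with node set $\{1,\dots,n\}$ and $m$ edges; each edge $k=\{i,j\}$ is given an arbitrary orientation, and $D\in\mathbb{R}^{n\times m}$ is the incidence matrix: $d_{ik}=+1$ if $i$ is the positive end of edge $k$, $-1$ if $i$ is the negative end, $0$ otherwise. $|D|$ denotes the matrix of entrywise absolute values of $D$. $\mathbf{1}_n$ is the all-ones vector. For each edge $k=\{i,j\}$ there is a susceptance $B_{ij}=B_{ji}>0$; each node has a self-susceptance $B_{ii}<0$ with $|B_{ii}|>\sum_{j\in\mathcal{N}_i}|B_{ij}|$ ($\mathcal{N}_i$ the neighbours of $i$ in $\mathcal{G}$), and reactances $X_{di}>X'_{di}>0$. For $V\in\mathbb{R}^n$, $\Gamma(V)=\mathrm{diag}(\gamma_1,\dots,\gamma_m)$ with $\gamma_k=V_iV_jB_{ij}$ for edge $k=\{i,j\}$. For $\eta\in\mathbb{R}^m$, $E(\eta)\in\mathbb{R}^{n\times n}$ is the symmetric matrix with $E_{ii}=\frac{1-B_{ii}(X_{di}-X'_{di})}{X_{di}-X'_{di}}$, $E_{ij}=-B_{ij}\cos(\eta_k)$ if $k=\{i,j\}$ is an edge, and $E_{ij}=0$ otherwise. $\boldsymbol{\sin}$, $\boldsymbol{\cos}$ act componentwise. $M,A,T$ are diagonal positive definite $n\times n$ matrices ($A=\mathrm{diag}(A_i)$), and $\overline E_{fd}\in\mathbb{R}^n$ is a constant vector. The network dynamics, with input $u\in\mathbb{R}^n$ (power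 generation) and demand $P^l$, are \[ \dot\eta=D^T\omega,\quad M\dot\omega=u-D\Gamma(V)\boldsymbol{\sin}(\eta)-A\omega-P^l,\quad T\dot V=-E(\eta)V+\overline E_{fd},\quad y=\omega, \] with state $(\eta,\omega,V)\in\mathbb{R}^m\times\mathbb{R}^n\times\mathbb{R}^n$. Condition $(\ast)$ on $(\overline\eta,\overline V)$: \[ E(\overline\eta)-\mathrm{diag}(\overline V)^{-1}|D|\Gamma(\overline V)\mathrm{diag}(\boldsymbol{\sin}(\overline\eta))\mathrm{diag}(\boldsymbol{\cos}(\overline\eta))^{-1}\mathrm{diag}(\boldsymbol{\sin}(\overline\eta))|D|^T\mathrm{diag}(\overline V)^{-1}>0. \] Storage function: $W_2(\eta,\overline\eta,V,\overline V)=-\mathbf{1}_m^T\Gamma(V)\boldsymbol{\cos}(\eta)+\mathbf{1}_m^T\Gamma(\overline V)\boldsymbol{\cos}(\overline\eta)-(\Gamma(\overline V)\boldsymbol{\sin}(\overline\eta))^T(\eta-\overline\eta)-\overline E_{fd}^T(V-\overline V)+\tfrac12V^TFV-\tfrac12\overline V^TF\overline V$, where $F$ is diagonal with $F_{ii}=\frac{1-B_{ii}(X_{di}-X'_{di})}{X_{di}-X'_{di}}$; note $\nabla_VW_2=E(\eta)V-\overline E_{fd}$. *)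

(* Defs.v *)
From Stdlib Require Export Reals Relations.
Open Scope R_scope.

Fixpoint rsum (N : nat) (f : nat -> R) : R :=
  match N with O => 0 | S p => rsum p f + f p end.

(* Graph: nodes 0..n-1, edges 0..m-1; edge k has positive end [ep k] and
   negative end [en k] (the chosen orientation); incidence d_ik = +1 / -1. *)

Definition edge_is (ep en : nat -> nat) (k i j : nat) : bool :=
  ((Nat.eqb (ep k) i && Nat.eqb (en k) j) || (Nat.eqb (ep k) j && Nat.eqb (en k) i))%bool.

Definition absD (ep en : nat -> nat) (i k : nat) : R :=
  if (Nat.eqb (ep k) i || Nat.eqb (en k) i)%bool then 1 else 0.

Definition other (ep en : nat -> nat) (i k : nat) : nat :=
  if Nat.eqb (ep k) i then en k else ep k.

Definition adj (m : nat) (ep en : nat -> nat) (i j : nat) : Prop :=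
  exists k, (k < m)%nat /\ edge_is ep en k i j = true.

Definition connected (n m : nat) (ep en : nat -> nat) : Prop :=
  forall i j, (i < n)%nat -> (j < n)%nat -> clos_refl_trans nat (adj m ep en) i j.

Definition gam (ep en : nat -> nat) (B : nat -> nat -> R) (V : nat -> R) (k : nat) : R :=
  V (ep k) * V (en k) * B (ep k) (en k).

Definition Fd (B : nat -> nat -> R) (Xd Xdp : nat -> R) (i : nat) : R :=
  (1 - B i i * (Xd i - Xdp i)) / (Xd i - Xdp i).

Definition Emat (m : nat) (ep en : nat -> nat) (B : nat -> nat -> R) (Xd Xdp : nat -> R)
  (eta : nat -> R) (i j : nat) : R :=
  if Nat.eqb i j then Fd B Xd Xdp i
  else rsum m (fun k => if edge_is ep en k i j then - B i j * cos (eta k) else 0).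

Definition EV (n m : nat) (ep en : nat -> nat) (B : nat -> nat -> R) (Xd Xdp : nat -> R)
  (eta V : nat -> R) (i : nat) : R :=
  rsum n (fun j => Emat m ep en B Xd Xdp eta i j * V j).

Definition W2 (n m : nat) (ep en : nat -> nat) (B : nat -> nat -> R) (Xd Xdp Efd : nat -> R)
  (eta etab V Vb : nat -> R) : R :=
  - rsum m (fun k => gam ep en B V k * cos (eta k))
  + rsum m (fun k => gam ep en B Vb k * cos (etab k))
  - rsum m (fun k => gam ep en B Vb k * sin (etab k) * (eta k - etab k))
  - rsum n (fun i => Efd i * (V i - Vb i))
  + / 2 * rsum n (fun i => V i * Fd B Xd Xdp i * V i)
  - / 2 * rsum n (fun i => Vb i * Fd B Xd Xdp i * Vb i).

Definition Qmat (m : nat) (ep en : nat -> nat) (B : nat -> nat -> R) (Xd Xdp : nat -> R)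
  (etab Vb : nat -> R) (i j : nat) : R :=
  Emat m ep en B Xd Xdp etab i j
  - / Vb i * rsum m (fun k => absD ep en i k * gam ep en B Vb k
        * (sin (etab k) * / cos (etab k) * sin (etab k)) * absD ep en j k) * / Vb j.

Definition posdef (n : nat) (Q : nat -> nat -> R) : Prop :=
  forall x : nat -> R, (exists i, (i < n)%nat /\ x i <> 0) ->
    rsum n (fun i => rsum n (fun j => x i * Q i j * x j)) > 0.

(* Main.v *)
Require Import Defs.
From Stdlib Require Import Reals.
From Stdlib Require Import Lra Psatz Lia Bool.
Open Scope R_scope.

Lemma rsum_ext N f g : (forall i, (i < N)%nat -> f i = g i) -> rsum N f = rsum N g.
Proof. induction N; simpl; intros H; [reflexivity|]. rewrite IHN by (intros; apply H; lia). rewrite H by lia. reflexivity. Qed.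
Lemma rsum_plus N f g : rsum N (fun i => f i + g i) = rsum N f + rsum N g.
Proof. induction N; simpl; [ring|]. rewrite IHN; ring. Qed.
Lemma rsum_minus N f g : rsum N (fun i => f i - g i) = rsum N f - rsum N g.
Proof. induction N; simpl; [ring|]. rewrite IHN; ring. Qed.
Lemma rsum_scal N c f : rsum N (fun i => c * f i) = c * rsum N f.
Proof. induction N; simpl; [ring|]. rewrite IHN; ring. Qed.
Lemma rsum_zero N : rsum N (fun _ => 0) = 0.
Proof. induction N; simpl; [ring|]. rewrite IHN; ring. Qed.
Lemma rsum_swap N M (f : nat -> nat -> R) :
  rsum N (fun i => rsum M (fun j => f i j)) = rsum M (fun j => rsum N (fun i => f i j)).
Proof. induction N; simpl. - symmetry; apply rsum_zero. - rewrite IHN, <- rsum_plus. reflexivity. Qed.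
Lemma rsum_delta N a f : (a < N)%nat -> rsum N (fun j => if Nat.eqb a j then f j else 0) = f a.
Proof.
  induction N; intros H; [lia|]. simpl. destruct (Nat.eq_dec a N).
  - subst. rewrite Nat.eqb_refl. rewrite (rsum_ext _ _ (fun _ => 0)).
    + rewrite rsum_zero; ring.
    + intros i Hi. destruct (Nat.eqb_spec N i); [lia|reflexivity].
  - rewrite IHN by lia. destruct (Nat.eqb_spec a N); [lia|ring].
Qed.
Lemma rsum_le N f g : (forall i, (i < N)%nat -> f i <= g i) -> rsum N f <= rsum N g.
Proof. induction N; simpl; intros H; [lra|]. assert (f N <= g N) by (apply H; lia).
  assert (rsum N f <= rsum N g) by (apply IHN; intros; apply H; lia). lra. Qed.
Lemma rsum_nonneg N f : (forall i, (i < N)%nat -> 0 <= f i) -> 0 <= rsum N f.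
Proof. intros H. rewrite <- (rsum_zero N). apply rsum_le. exact H. Qed.
Lemma term_le_rsum N f k : (forall i, (i < N)%nat -> 0 <= f i) -> (k < N)%nat -> f k <= rsum N f.
Proof. induction N; intros H Hk; [lia|]. simpl. assert (0 <= f N) by (apply H; lia).
  destruct (Nat.eq_dec k N).
  - subst. assert (0 <= rsum N f) by (apply rsum_nonneg; intros; apply H; lia). lra.
  - assert (f k <= rsum N f) by (apply IHN; [intros; apply H; lia| lia]). lra. Qed.
Lemma rsum_const_le N f C : (forall i, (i < N)%nat -> f i <= C) -> rsum N f <= INR N * C.
Proof. induction N; cbn [rsum]; intros H; [simpl; lra|]. assert (f N <= C) by (apply H; lia).
  assert (rsum N f <= INR N * C) by (apply IHN; intros; apply H; lia).
  rewrite S_INR. lra. Qed.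
Lemma rsum_abs N f : Rabs (rsum N f) <= rsum N (fun i => Rabs (f i)).
Proof. induction N; simpl. - rewrite Rabs_R0; lra.
  - eapply Rle_trans; [apply Rabs_triang|]. lra. Qed.
Lemma rsum_pos N f k : (forall i, (i < N)%nat -> 0 <= f i) -> (k < N)%nat -> 0 < f k -> 0 < rsum N f.
Proof. intros. pose proof (term_le_rsum N f k H H0). lra. Qed.
Lemma rsum_opp N f : rsum N (fun i => - f i) = - rsum N f.
Proof. induction N; simpl; [ring|]. rewrite IHN; ring. Qed.
Lemma cos_b (d : R) : -1 <= d <= 1 ->
  1 - d*d/2 <= cos d <= 1 - d*d/2 + d*d*(d*d)/24.
Proof.
  intros H. destruct (pre_cos_bound d 0) as [H1 H2]; try lra.
  unfold cos_approx, cos_term in *; simpl in *. lra.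
Qed.
Lemma sin_b (d : R) : -1 <= d <= 1 -> Rabs (sin d - d) <= Rabs d * (d*d) / 6.
Proof.
  intros H. assert (K: forall a, 0 <= a <= 1 -> a - a*(a*a)/6 <= sin a <= a - a*(a*a)/6 + a*(a*a)*(a*a)/120).
  { intros a Ha. destruct (pre_sin_bound a 0) as [H1 H2]; try lra.
    unfold sin_approx, sin_term in *; simpl in *. lra. }
  assert (K2: forall a, 0 <= a <= 1 -> 0 <= a*(a*a) /\ a*(a*a)*(a*a) <= a*(a*a)).
  { intros a Ha. assert (0 <= a*a) by nra. assert (a*a <= 1) by nra. assert (0 <= a*(a*a)) by (apply Rmult_le_pos; lra).
  assert (0 <= a*(a*a)*(1 - a*a)) by (apply Rmult_le_pos; lra). split; lra. }
  destruct (Rle_dec 0 d).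
  - destruct (K d) as [A1 A2]; [lra|]. destruct (K2 d) as [B1 B2]; [lra|]. rewrite (Rabs_right d) by lra.
    apply Rabs_le; split; lra.
  - destruct (K (-d)) as [A1 A2]; [lra|]. destruct (K2 (-d)) as [B1 B2]; [lra|].
    rewrite sin_neg in *. rewrite (Rabs_left d) by lra.
    apply Rabs_le; split; lra.
Qed.

Lemma rsum2_delta N a b (g : nat -> nat -> R) : (a < N)%nat -> (b < N)%nat ->
  rsum N (fun i => rsum N (fun j => if Nat.eqb a i && Nat.eqb b j then g i j else 0)) = g a b.
Proof.
  intros Ha Hb. rewrite (rsum_ext _ _ (fun i => if Nat.eqb a i then g i b else 0)).
  - apply (rsum_delta N a (fun i => g i b)); exact Ha.
  - intros i Hi. destruct (Nat.eqb a i); simpl.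
    + apply (rsum_delta N b (fun j => g i j)); exact Hb.
    + apply rsum_zero.
Qed.

Lemma Emat_dec m ep en B Xd Xdp eta i j :
  (forall k, (k < m)%nat -> ep k <> en k) -> (forall i j, B i j = B j i) ->
  Emat m ep en B Xd Xdp eta i j = (if Nat.eqb i j then Fd B Xd Xdp i else 0) +
   rsum m (fun k => (if Nat.eqb (ep k) i && Nat.eqb (en k) j then - B (ep k) (en k) * cos (eta k) else 0)
                  + (if Nat.eqb (en k) i && Nat.eqb (ep k) j then - B (ep k) (en k) * cos (eta k) else 0)).
Proof.
  intros Hne Hs. unfold Emat. destruct (Nat.eqb_spec i j).
  - subst. rewrite (rsum_ext _ _ (fun _ => 0)). { rewrite rsum_zero; ring. }
    intros k Hk. specialize (Hne k Hk).
    destruct (Nat.eqb_spec (ep k) j), (Nat.eqb_spec (en k) j); simpl; try lia; ring.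
  - rewrite Rplus_0_l. apply rsum_ext. intros k Hk. unfold edge_is.
    destruct (Nat.eqb_spec (ep k) i), (Nat.eqb_spec (en k) j), (Nat.eqb_spec (ep k) j),
      (Nat.eqb_spec (en k) i); simpl; subst; try lia; try ring.
    rewrite Hs; ring.
Qed.

Lemma quadE n m ep en B Xd Xdp eta (x y : nat -> R) :
  (forall k, (k < m)%nat -> (ep k < n)%nat /\ (en k < n)%nat /\ ep k <> en k) -> (forall i j, B i j = B j i) ->
  rsum n (fun i => x i * rsum n (fun j => Emat m ep en B Xd Xdp eta i j * y j)) =
  rsum n (fun i => Fd B Xd Xdp i * x i * y i)
  - rsum m (fun k => B (ep k) (en k) * cos (eta k) * (x (ep k) * y (en k) + x (en k) * y (ep k))).
Proof.
  intros He Hs.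
  set (c := fun k => - B (ep k) (en k) * cos (eta k)).
  transitivity (rsum n (fun i => Fd B Xd Xdp i * x i * y i) +
     rsum n (fun i => rsum m (fun k => rsum n (fun j =>
        (if Nat.eqb (ep k) i && Nat.eqb (en k) j then x i * c k * y j else 0)
      + (if Nat.eqb (en k) i && Nat.eqb (ep k) j then x i * c k * y j else 0))))).
  - rewrite <- rsum_plus. apply rsum_ext. intros i Hi.
    rewrite (rsum_ext _ _ (fun j => (if Nat.eqb i j then Fd B Xd Xdp i * y j else 0) +
        rsum m (fun k => ((if Nat.eqb (ep k) i && Nat.eqb (en k) j then c k else 0)
                  + (if Nat.eqb (en k) i && Nat.eqb (ep k) j then c k else 0)) * y j))).
    2:{ intros j Hj. rewrite Emat_dec by (try intros; try apply He; auto; apply Hs).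
        rewrite Rmult_plus_distr_r. f_equal. { destruct (Nat.eqb i j); ring. }
        rewrite Rmult_comm, <- rsum_scal. apply rsum_ext. intros; unfold c; ring. }
    rewrite rsum_plus, rsum_delta by exact Hi. rewrite rsum_swap.
    rewrite Rmult_plus_distr_l, <- rsum_scal. f_equal. { ring. }
    apply rsum_ext. intros k Hk. rewrite <- rsum_scal. apply rsum_ext. intros j Hj.
    destruct (Nat.eqb (ep k) i && Nat.eqb (en k) j), (Nat.eqb (en k) i && Nat.eqb (ep k) j); ring.
  - rewrite rsum_swap. unfold Rminus. f_equal. rewrite <- rsum_opp. apply rsum_ext. intros k Hk. destruct (He k Hk) as [H1 [H2 H3]].
    rewrite (rsum_ext _ _ (fun i => rsum n (fun j => (if Nat.eqb (ep k) i && Nat.eqb (en k) j then x i * c k * y j else 0))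
        + rsum n (fun j => (if Nat.eqb (en k) i && Nat.eqb (ep k) j then x i * c k * y j else 0)))).
    2:{ intros; apply rsum_plus. }
    rewrite rsum_plus, !(rsum2_delta n _ _ (fun i j => x i * c k * y j)) by assumption.
    unfold c; ring.
Qed.

Lemma cs_step S A C a b : 0 <= A -> 0 <= C -> S * S <= A * C ->
  (S + a * b) * (S + a * b) <= (A + a * a) * (C + b * b).
Proof.
  intros HA HC H. destruct (Req_dec A 0) as [E|E].
  - subst. assert (S * S <= 0) by lra. assert (S = 0) by nra. subst. nra.
  - assert (HA' : 0 < A) by lra.
    assert (K : 0 <= A * (A * (b*b) + a*a*C - 2*S*a*b)).
    { assert (A * (A * (b*b) + a*a*C - 2*S*a*b) = (A*b - a*S)*(A*b - a*S) + a*a*(A*C - S*S)) by ring.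
      rewrite H0. assert (0 <= (A*b - a*S)*(A*b - a*S)) by apply (Rle_0_sqr (A*b - a*S)). assert (0 <= a*a*(A*C-S*S)) by
        (apply Rmult_le_pos; [nra|lra]). lra. }
    assert (0 <= A * (b*b) + a*a*C - 2*S*a*b).
    { destruct (Rle_dec 0 (A * (b*b) + a*a*C - 2*S*a*b)); [auto|].
      exfalso. assert (A * (A * (b*b) + a*a*C - 2*S*a*b) < 0) by (apply Rmult_pos_neg; lra). lra. }
    nra.
Qed.

Lemma cauchy_schwarz N b x :
  rsum N (fun i => b i * x i) * rsum N (fun i => b i * x i) <=
  rsum N (fun i => b i * b i) * rsum N (fun i => x i * x i).
Proof.
  induction N; simpl. - lra.
  - apply cs_step; auto; apply rsum_nonneg; intros; nra.
Qed.

Definition qf N (Q : nat -> nat -> R) (x : nat -> R) := rsum N (fun i => rsum N (fun j => x i * Q i j * x j)).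

Lemma qf_ext N Q x y : (forall i, (i < N)%nat -> x i = y i) -> qf N Q x = qf N Q y.
Proof. intros H. unfold qf. apply rsum_ext; intros i Hi. apply rsum_ext; intros j Hj. rewrite !H by auto. reflexivity. Qed.

Lemma qf_peel N Q x : qf (S N) Q x = qf N Q x + x N * rsum N (fun i => (Q i N + Q N i) * x i) + Q N N * x N * x N.
Proof.
  unfold qf. cbn [rsum]. rewrite rsum_plus.
  rewrite <- rsum_scal. rewrite (Rmult_comm (Q N N)).
  assert (E: rsum N (fun i => x N * ((Q i N + Q N i) * x i)) =
     rsum N (fun i => x i * Q i N * x N) + rsum N (fun j => x N * Q N j * x j)).
  { rewrite <- rsum_plus. apply rsum_ext; intros; ring. }
  rewrite E. ring.
Qed.

Lemma unif_posdef N : forall Q, posdef N Q -> exists c, c > 0 /\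
  forall x, qf N Q x >= c * rsum N (fun i => x i * x i).
Proof.
  induction N; intros Q HQ.
  - exists 1. split; [lra|]. intros x. unfold qf; simpl; lra.
  - set (a := Q N N).
    set (b := fun i => Q i N + Q N i).
    set (s := fun x : nat -> R => rsum N (fun i => b i * x i)).
    assert (Hpeel : forall x, qf (S N) Q x = qf N Q x + x N * s x + a * x N * x N).
    { intros x. rewrite qf_peel. reflexivity. }
    assert (Ha : a > 0).
    { set (e := fun i => if Nat.eqb i N then 1 else 0).
      assert (H1 := HQ e). unfold posdef in HQ.
      assert (qf (S N) Q e > 0). { apply HQ. exists N. split; [lia|]. unfold e; rewrite Nat.eqb_refl; lra. }
      rewrite Hpeel in H. assert (qf N Q e = 0).
      { rewrite (qf_ext N Q e (fun _ => 0)). - unfold qf. rewrite (rsum_ext _ _ (fun _ => 0)). apply rsum_zero.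
          intros; rewrite (rsum_ext _ _ (fun _ => 0)). apply rsum_zero. intros; ring.
        - intros i Hi. unfold e. destruct (Nat.eqb_spec i N); [lia|auto]. }
      assert (s e = 0).
      { unfold s. rewrite (rsum_ext _ _ (fun _ => 0)). apply rsum_zero.
        intros i Hi. unfold e. destruct (Nat.eqb_spec i N); [lia|ring]. }
      assert (e N = 1) by (unfold e; rewrite Nat.eqb_refl; reflexivity).
      rewrite H0, H2, H3 in H. lra. }
    set (Q' := fun i j => Q i j - b i * b j / (4 * a)).
    assert (HQ' : forall y, qf N Q' y = qf N Q y - s y * s y / (4 * a)).
    { intros y. unfold qf, Q', s. 
      assert (E: rsum N (fun i => rsum N (fun j => y i * (Q i j - b i * b j / (4*a)) * y j)) =
        rsum N (fun i => rsum N (fun j => y i * Q i j * y j)) - rsum N (fun i => (/ (4*a) * (b i * y i)) * rsum N (fun j => b j * y j))).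
      { rewrite <- rsum_minus. apply rsum_ext. intros i Hi. rewrite Rmult_comm, <- rsum_scal, <- rsum_minus.
        apply rsum_ext; intros; field; lra. }
      rewrite E. f_equal.
      rewrite (rsum_ext _ _ (fun i => (/(4*a) * rsum N (fun j => b j * y j)) * (b i * y i))) by (intros; ring).
      rewrite rsum_scal. field; lra. }
    assert (HpdQ' : posdef N Q').
    { intros y [i [Hi Hy]].
      set (x := fun j => if Nat.eqb j N then - s y / (2 * a) else y j).
      assert (Exy : forall j, (j < N)%nat -> x j = y j).
      { intros j Hj; unfold x; destruct (Nat.eqb_spec j N); [lia|auto]. }
      assert (Hx : qf (S N) Q x > 0).
      { apply HQ. exists i. split; [lia|]. rewrite Exy; auto. }
      rewrite Hpeel in Hx. rewrite (qf_ext N Q x y Exy) in Hx.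
      assert (s x = s y) by (unfold s; apply rsum_ext; intros; rewrite Exy; auto).
      rewrite H in Hx. assert (x N = - s y / (2 * a)) by (unfold x; rewrite Nat.eqb_refl; reflexivity).
      rewrite H0 in Hx.
      change (qf N Q' y > 0). rewrite HQ'. replace (qf N Q y - s y * s y / (4 * a)) with
        (qf N Q y + - s y / (2 * a) * s y + a * (- s y / (2 * a)) * (- s y / (2 * a))) by (field; lra).
      exact Hx. }
    destruct (IHN Q' HpdQ') as [c' [Hc' Hc'x]].
    set (S2 := rsum N (fun i => b i * b i)).
    assert (HS2 : 0 <= S2) by (apply rsum_nonneg; intros; nra).
    set (rho := Rmin (a / 2) (c' * (a * a) / (S2 + 1))).
    assert (Hrho : 0 < rho).
    { unfold rho. apply Rmin_glb_lt; [lra|]. apply Rdiv_lt_0_compat; [|lra]. apply Rmult_lt_0_compat; nra. }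
    exists (Rmin (c' / 2) rho). split.
    { apply Rlt_gt, Rmin_glb_lt; lra. }
    intros x. cbn [rsum]. set (Y := rsum N (fun i => x i * x i)).
    assert (HY : 0 <= Y) by (apply rsum_nonneg; intros; nra).
    assert (CS : s x * s x <= S2 * Y) by apply cauchy_schwarz.
    set (z := x N + s x / (2 * a)).
    assert (Eq : qf (S N) Q x = qf N Q' x + a * z * z).
    { rewrite Hpeel, HQ'. unfold z. field. lra. }
    rewrite Eq. specialize (Hc'x x). fold Y in Hc'x.
    assert (Hxn : x N * x N <= 2 * (z * z) + S2 * Y / (2 * (a * a))).
    { assert (x N = z - s x / (2 * a)) by (unfold z; ring). rewrite H.
      assert ((z - s x / (2*a)) * (z - s x / (2*a)) <= 2 * (z*z) + s x * s x / (2 * (a*a))).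
      { assert (0 <= (z + s x / (2*a)) * (z + s x / (2*a))) by apply Rle_0_sqr.
        assert (s x * s x / (2 * (a*a)) = 2 * ((s x / (2*a)) * (s x / (2*a)))) by (field; lra). nra. }
      assert (s x * s x / (2 * (a*a)) <= S2 * Y / (2 * (a*a))).
      { unfold Rdiv. apply Rmult_le_compat_r; [|lra]. left; apply Rinv_0_lt_compat; nra. }
      lra. }
    assert (R1 : rho <= a / 2) by apply Rmin_l.
    assert (R2 : rho <= c' * (a * a) / (S2 + 1)) by apply Rmin_r.
    assert (R3 : rho * (S2 * Y / (2 * (a * a))) <= c' / 2 * Y).
    { assert (rho * S2 <= c' * (a*a)).
      { assert (rho * (S2 + 1) <= c' * (a*a)).
        { apply (Rmult_le_compat_r (S2 + 1)) in R2; [|lra]. unfold Rdiv in R2.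
          rewrite Rmult_assoc, Rinv_l, Rmult_1_r in R2 by lra. exact R2. }
        nra. }
      replace (rho * (S2 * Y / (2 * (a * a)))) with ((rho * S2) * Y / (2 * (a*a))) by (field; lra).
      apply (Rmult_le_reg_r (2 * (a*a))); [nra|]. unfold Rdiv. rewrite Rmult_assoc, Rinv_l by nra.
      rewrite Rmult_1_r. assert (0 <= Y) by auto. nra. }
    assert (M1 : Rmin (c' / 2) rho <= c' / 2) by apply Rmin_l.
    assert (M2 : Rmin (c' / 2) rho <= rho) by apply Rmin_r.
    assert (0 <= x N * x N) by nra.
    assert (Rmin (c' / 2) rho * (Y + x N * x N) <= c' / 2 * Y + rho * (x N * x N)) by nra.
    assert (rho * (x N * x N) <= rho * (2 * (z*z)) + rho * (S2 * Y / (2 * (a*a)))).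
    { rewrite <- Rmult_plus_distr_l. apply Rmult_le_compat_l; lra. }
    assert (rho * (2 * (z*z)) <= a * z * z) by nra.
    lra.
Qed.

Lemma D_plus f g t a b l : derivable_pt_lim f t a -> derivable_pt_lim g t b -> l = a + b ->
  derivable_pt_lim (fun s => f s + g s) t l.
Proof. intros Ha Hb ->. exact (derivable_pt_lim_plus f g t a b Ha Hb). Qed.
Lemma D_minus f g t a b l : derivable_pt_lim f t a -> derivable_pt_lim g t b -> l = a - b ->
  derivable_pt_lim (fun s => f s - g s) t l.
Proof. intros Ha Hb ->. exact (derivable_pt_lim_minus f g t a b Ha Hb). Qed.
Lemma D_mult f g t a b l : derivable_pt_lim f t a -> derivable_pt_lim g t b -> l = a * g t + f t * b ->
  derivable_pt_lim (fun s => f s * g s) t l.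
Proof. intros Ha Hb ->. exact (derivable_pt_lim_mult f g t a b Ha Hb). Qed.
Lemma D_const c t l : l = 0 -> derivable_pt_lim (fun _ => c) t l.
Proof. intros ->. apply derivable_pt_lim_const. Qed.
Lemma D_opp f t a l : derivable_pt_lim f t a -> l = - a -> derivable_pt_lim (fun s => - f s) t l.
Proof. intros Ha ->. exact (derivable_pt_lim_opp f t a Ha). Qed.
Lemma D_cos f t a l : derivable_pt_lim f t a -> l = - sin (f t) * a -> derivable_pt_lim (fun s => cos (f s)) t l.
Proof. intros Ha ->. apply (derivable_pt_lim_comp f cos t a (- sin (f t)) Ha). apply derivable_pt_lim_cos. Qed.
Lemma D_rsum N (f : nat -> R -> R) df t :
  (forall k, (k < N)%nat -> derivable_pt_lim (f k) t (df k)) ->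
  derivable_pt_lim (fun s => rsum N (fun k => f k s)) t (rsum N df).
Proof.
  induction N; intros H; simpl.
  - apply D_const; reflexivity.
  - apply (D_plus (fun s => rsum N (fun k => f k s)) (f N) t (rsum N df) (df N)); auto.
Qed.

Lemma absD_sum n ep en k h : (ep k < n)%nat -> (en k < n)%nat -> ep k <> en k ->
  rsum n (fun i => absD ep en i k * h i) = h (ep k) + h (en k).
Proof.
  intros Hp Hq Hne.
  rewrite (rsum_ext _ _ (fun i => (if Nat.eqb (ep k) i then h i else 0) + (if Nat.eqb (en k) i then h i else 0))).
  - rewrite rsum_plus, !rsum_delta by auto. reflexivity.
  - intros i Hi. unfold absD. destruct (Nat.eqb_spec (ep k) i), (Nat.eqb_spec (en k) i); simpl; try lia; ring.
Qed.

Definition wk (ep en : nat -> nat) (V Vb : nat -> R) k :=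
  (V (ep k) - Vb (ep k)) / Vb (ep k) + (V (en k) - Vb (en k)) / Vb (en k).

Lemma qf_Qmat n m ep en B Xd Xdp etab Vb V :
  (forall k, (k < m)%nat -> (ep k < n)%nat /\ (en k < n)%nat /\ ep k <> en k) ->
  (forall i, (i < n)%nat -> Vb i > 0) ->
  qf n (Qmat m ep en B Xd Xdp etab Vb) (fun i => V i - Vb i) =
  rsum n (fun i => (V i - Vb i) * rsum n (fun j => Emat m ep en B Xd Xdp etab i j * (V j - Vb j)))
  - rsum m (fun k => gam ep en B Vb k * (sin (etab k) * / cos (etab k) * sin (etab k)) * wk ep en V Vb k * wk ep en V Vb k).
Proof.
  intros He HVb. unfold qf, Qmat.
  set (c := fun k => gam ep en B Vb k * (sin (etab k) * / cos (etab k) * sin (etab k))).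
  set (a := fun i => (V i - Vb i) / Vb i).
  transitivity (rsum n (fun i => (V i - Vb i) * rsum n (fun j => Emat m ep en B Xd Xdp etab i j * (V j - Vb j)))
     - rsum n (fun i => rsum n (fun j => rsum m (fun k => a i * absD ep en i k * c k * (absD ep en j k * a j))))).
  - rewrite <- rsum_minus. apply rsum_ext. intros i Hi. rewrite <- rsum_scal, <- rsum_minus.
    apply rsum_ext. intros j Hj.
    assert (Ek : rsum m (fun k => a i * absD ep en i k * c k * (absD ep en j k * a j)) =
      (a i * a j) * rsum m (fun k => absD ep en i k * gam ep en B Vb k *
        (sin (etab k) * / cos (etab k) * sin (etab k)) * absD ep en j k)).
    { rewrite <- rsum_scal. apply rsum_ext. intros; unfold c; ring. }
    rewrite Ek. unfold a. specialize (HVb i Hi) as HVi. assert (Vb j > 0) by (apply HVb; auto).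
    field; lra.
  - f_equal.
    rewrite (rsum_ext n _ (fun i => rsum m (fun k => rsum n (fun j => a i * absD ep en i k * c k * (absD ep en j k * a j)))))
      by (intros; apply rsum_swap).
    rewrite rsum_swap. apply rsum_ext. intros k Hk. destruct (He k Hk) as [Hp [Hq Hne]].
    rewrite (rsum_ext n _ (fun i => (a i * absD ep en i k * c k) * rsum n (fun j => absD ep en j k * a j)))
      by (intros; apply rsum_scal).
    rewrite absD_sum by auto.
    rewrite (rsum_ext n _ (fun i => (c k * (a (ep k) + a (en k))) * (absD ep en i k * a i))) by (intros; ring).
    rewrite rsum_scal, absD_sum by auto. unfold wk, a. fold (c k). ring.
Qed.

Definition gk (etab eta : nat -> R) k := cos (etab k) - cos (eta k) - sin (etab k) * (eta k - etab k).
Definition Rk (ep en : nat -> nat) (B : nat -> nat -> R) (V Vb eta etab : nat -> R) k :=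
  B (ep k) (en k) * (Vb (ep k) * Vb (en k) * (gk etab eta k - / 2 * cos (etab k) * ((eta k - etab k) * (eta k - etab k)))
   + ((Vb (en k) * (V (ep k) - Vb (ep k)) + Vb (ep k) * (V (en k) - Vb (en k))) + (V (ep k) - Vb (ep k)) * (V (en k) - Vb (en k))) * gk etab eta k
   + (V (ep k) - Vb (ep k)) * (V (en k) - Vb (en k)) * sin (etab k) * (eta k - etab k)).
Definition zk (ep en : nat -> nat) (V Vb eta etab : nat -> R) k :=
  (eta k - etab k) + sin (etab k) / cos (etab k) * wk ep en V Vb k.

Lemma W2_decomp n m ep en B Xd Xdp Efd etab Vb eta V :
  (forall k, (k < m)%nat -> (ep k < n)%nat /\ (en k < n)%nat /\ ep k <> en k) ->
  (forall i j, B i j = B j i) ->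
  (forall i, (i < n)%nat -> Vb i > 0) ->
  (forall k, (k < m)%nat -> cos (etab k) > 0) ->
  (forall i, (i < n)%nat -> EV n m ep en B Xd Xdp etab Vb i = Efd i) ->
  W2 n m ep en B Xd Xdp Efd eta etab V Vb =
  / 2 * qf n (Qmat m ep en B Xd Xdp etab Vb) (fun i => V i - Vb i)
  + / 2 * rsum m (fun k => gam ep en B Vb k * cos (etab k) * (zk ep en V Vb eta etab k * zk ep en V Vb eta etab k))
  + rsum m (fun k => Rk ep en B V Vb eta etab k).
Proof.
  intros He Hs HVb Hc Heq.
  rewrite qf_Qmat by auto.
  rewrite (quadE n m ep en B Xd Xdp etab (fun i => V i - Vb i) (fun i => V i - Vb i) He Hs).
  assert (HEf : rsum n (fun i => Efd i * (V i - Vb i)) =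
     rsum n (fun i => Fd B Xd Xdp i * (V i - Vb i) * Vb i)
     - rsum m (fun k => B (ep k) (en k) * cos (etab k) * ((V (ep k) - Vb (ep k)) * Vb (en k) + (V (en k) - Vb (en k)) * Vb (ep k)))).
  { rewrite <- (quadE n m ep en B Xd Xdp etab (fun i => V i - Vb i) Vb He Hs).
    apply rsum_ext. intros i Hi. rewrite <- Heq by auto. unfold EV. ring. }
  assert (EN : rsum n (fun i => Fd B Xd Xdp i * (V i - Vb i) * (V i - Vb i)) =
     - 2 * rsum n (fun i => Fd B Xd Xdp i * (V i - Vb i) * Vb i) + rsum n (fun i => V i * Fd B Xd Xdp i * V i)
     - rsum n (fun i => Vb i * Fd B Xd Xdp i * Vb i)).
  { rewrite <- rsum_scal, <- rsum_plus, <- rsum_minus. apply rsum_ext; intros; ring. }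
  assert (EM : rsum m (fun k => - (gam ep en B V k * cos (eta k)) + gam ep en B Vb k * cos (etab k)
       - gam ep en B Vb k * sin (etab k) * (eta k - etab k)
       + B (ep k) (en k) * cos (etab k) * ((V (ep k) - Vb (ep k)) * Vb (en k) + (V (en k) - Vb (en k)) * Vb (ep k)))
     = rsum m (fun k => / 2 * (- (B (ep k) (en k) * cos (etab k) * ((V (ep k) - Vb (ep k)) * (V (en k) - Vb (en k)) + (V (en k) - Vb (en k)) * (V (ep k) - Vb (ep k)))))
        - / 2 * (gam ep en B Vb k * (sin (etab k) * / cos (etab k) * sin (etab k)) * wk ep en V Vb k * wk ep en V Vb k)
        + / 2 * (gam ep en B Vb k * cos (etab k) * (zk ep en V Vb eta etab k * zk ep en V Vb eta etab k))
        + Rk ep en B V Vb eta etab k)).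
  { apply rsum_ext. intros k Hk. destruct (He k Hk) as [Hp [Hq _]].
    assert (Vb (ep k) > 0) by auto. assert (Vb (en k) > 0) by auto. assert (cos (etab k) > 0) by auto.
    unfold gam, Rk, gk, zk, wk. field. repeat split; lra. }
  repeat rewrite ?rsum_plus, ?rsum_minus, ?rsum_opp, ?rsum_scal in EM.
  change (rsum m (Rk ep en B V Vb eta etab)) with (rsum m (fun k => Rk ep en B V Vb eta etab k)) in EM.
  unfold W2. rewrite HEf.
  lra.
Qed.

Lemma abs_mul_le a b A Bd : Rabs a <= A -> Rabs b <= Bd -> Rabs (a*b) <= A*Bd.
Proof. intros. rewrite Rabs_mult. apply Rmult_le_compat; auto using Rabs_pos. Qed.

Lemma abs_le_inv x a : Rabs x <= a -> -a <= x <= a.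
Proof. unfold Rabs; destruct (Rcase_abs x); lra. Qed.

Lemma sq_abs x : Rabs x * Rabs x = x * x.
Proof. rewrite <- Rabs_mult. apply Rabs_right. assert (0 <= x*x) by apply Rle_0_sqr. lra. Qed.

Lemma g_bounds x y dl : Rabs (y - x) <= dl -> dl <= 1 ->
  Rabs (cos x - cos y - sin x * (y - x)) <= (y - x) * (y - x) /\
  Rabs (cos x - cos y - sin x * (y - x) - / 2 * cos x * ((y - x) * (y - x))) <= dl * ((y - x) * (y - x)).
Proof.
  intros Hd Hdl. set (d := y - x). replace y with (x + d) by (unfold d; ring). rewrite cos_plus.
  assert (Hd0 : Rabs d <= 1) by (unfold d; lra). assert (Hd' : Rabs d <= dl) by (unfold d; lra).
  assert (Hd1 : -1 <= d <= 1) by (pose proof (abs_le_inv d 1 Hd0); lra).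
  destruct (cos_b d Hd1) as [C1 C2]. pose proof (sin_b d Hd1) as S1.
  pose proof (COS_bound x) as Cx. pose proof (SIN_bound x) as Sx.
  assert (Acx : Rabs (cos x) <= 1) by (apply Rabs_le; lra).
  assert (Asx : Rabs (sin x) <= 1) by (apply Rabs_le; lra).
  assert (dd : 0 <= d * d) by apply Rle_0_sqr.
  assert (ad : Rabs d * (d*d) <= d*d).
  { rewrite <- (Rmult_1_l (d*d)) at 2. apply Rmult_le_compat_r; lra. }
  assert (ad2 : Rabs d * (d*d) <= dl * (d*d)) by (apply Rmult_le_compat_r; lra).
  assert (d4 : d*d*(d*d) <= dl * (d*d)).
  { apply Rmult_le_compat_r; auto. rewrite <- sq_abs. assert (0 <= Rabs d) by apply Rabs_pos.
    assert (Rabs d * Rabs d <= Rabs d * 1) by (apply Rmult_le_compat_l; lra). lra. }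
  assert (d4' : dl * (d*d) <= 1 * (d*d)) by (apply Rmult_le_compat_r; lra).
  split.
  - replace (cos x - (cos x * cos d - sin x * sin d) - sin x * d) with (cos x * (1 - cos d) + sin x * (sin d - d)) by ring.
    eapply Rle_trans; [apply Rabs_triang|].
    assert (Rabs (cos x * (1 - cos d)) <= 1 * (d*d/2)) by (apply abs_mul_le; auto; apply Rabs_le; lra).
    assert (Rabs (sin x * (sin d - d)) <= 1 * (Rabs d * (d*d)/6)) by (apply abs_mul_le; auto).
    lra.
  - replace (cos x - (cos x * cos d - sin x * sin d) - sin x * d - / 2 * cos x * (d * d))
      with (cos x * (1 - cos d - d*d/2) + sin x * (sin d - d)) by field.
    eapply Rle_trans; [apply Rabs_triang|].
    assert (Rabs (cos x * (1 - cos d - d*d/2)) <= 1 * (d*d*(d*d)/24)) by (apply abs_mul_le; auto; apply Rabs_le; lra).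
    assert (Rabs (sin x * (sin d - d)) <= 1 * (Rabs d * (d*d)/6)) by (apply abs_mul_le; auto).
    lra.
Qed.

Lemma Rk_core Bk vp vq up uq sb g r d dl : Bk > 0 -> vp > 0 -> vq > 0 -> 0 < dl <= 1 ->
  Rabs up <= dl -> Rabs uq <= dl -> Rabs d <= dl -> Rabs sb <= 1 ->
  Rabs g <= d * d -> Rabs r <= dl * (d * d) ->
  Rabs (Bk * (vp * vq * r + ((vq * up + vp * uq) + up * uq) * g + up * uq * sb * d))
  <= dl * (Bk * (vp * vq + vp + vq + 1)) * (d * d + up * up + uq * uq).
Proof.
  intros HB Hp Hq Hdl Hup Huq Hd Hsb Hg Hr.
  assert (dd : 0 <= d*d) by apply Rle_0_sqr.
  assert (Hup' : 0 <= Rabs up) by apply Rabs_pos. assert (Huq' : 0 <= Rabs uq) by apply Rabs_pos.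
  assert (T1 : Rabs (vp * vq * r) <= (vp * vq) * (dl * (d*d))).
  { apply abs_mul_le; auto. rewrite Rabs_right; [lra|]. apply Rle_ge, Rmult_le_pos; lra. }
  assert (Huu : Rabs (up * uq) <= dl * dl) by (apply abs_mul_le; auto).
  assert (Hdd : dl * dl <= dl * 1) by (apply Rmult_le_compat_l; lra).
  assert (T2a : Rabs ((vq * up + vp * uq) + up * uq) <= (vq + vp + 1) * dl).
  { eapply Rle_trans; [apply Rabs_triang|]. eapply Rle_trans; [apply Rplus_le_compat_r, Rabs_triang|].
    assert (Rabs (vq * up) <= vq * dl) by (apply abs_mul_le; auto; rewrite Rabs_right; lra).
    assert (Rabs (vp * uq) <= vp * dl) by (apply abs_mul_le; auto; rewrite Rabs_right; lra).
    lra. }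
  assert (T2 : Rabs (((vq * up + vp * uq) + up * uq) * g) <= ((vq + vp + 1) * dl) * (d*d)) by (apply abs_mul_le; auto).
  assert (T3a : Rabs (up * uq) <= (up*up + uq*uq) / 2).
  { rewrite Rabs_mult, <- (sq_abs up), <- (sq_abs uq).
    assert (0 <= (Rabs up - Rabs uq) * (Rabs up - Rabs uq)) by apply Rle_0_sqr. lra. }
  assert (T3b : Rabs (sb * d) <= 1 * dl) by (apply abs_mul_le; auto).
  assert (T3 : Rabs (up * uq * sb * d) <= (up*up + uq*uq) / 2 * (1 * dl)).
  { rewrite Rmult_assoc. apply abs_mul_le; auto. }
  assert (S : Rabs (vp * vq * r + ((vq * up + vp * uq) + up * uq) * g + up * uq * sb * d)
    <= vp * vq * (dl * (d*d)) + (vq + vp + 1) * dl * (d*d) + (up*up + uq*uq) / 2 * (1 * dl)).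
  { eapply Rle_trans; [apply Rabs_triang|]. eapply Rle_trans; [apply Rplus_le_compat_r, Rabs_triang|]. lra. }
  rewrite Rabs_mult, (Rabs_right Bk) by lra.
  assert (Bk * Rabs (vp * vq * r + ((vq * up + vp * uq) + up * uq) * g + up * uq * sb * d) <=
    Bk * (vp * vq * (dl * (d*d)) + (vq + vp + 1) * dl * (d*d) + (up*up + uq*uq) / 2 * (1 * dl))).
  { apply Rmult_le_compat_l; lra. }
  eapply Rle_trans; [exact H|].
  assert (0 <= up*up) by apply Rle_0_sqr. assert (0 <= uq*uq) by apply Rle_0_sqr.
  assert (0 <= vp*vq) by nra.
  assert (E : dl * (Bk * (vp * vq + vp + vq + 1)) * (d * d + up * up + uq * uq) -
     Bk * (vp * vq * (dl * (d*d)) + (vq + vp + 1) * dl * (d*d) + (up*up + uq*uq) / 2 * (1 * dl))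
     = (dl * Bk) * ((vp*vq + vp + vq) * (up*up + uq*uq) + (up*up+uq*uq)/2)) by field.
  assert (0 <= (dl * Bk) * ((vp*vq + vp + vq) * (up*up + uq*uq) + (up*up+uq*uq)/2)).
  { apply Rmult_le_pos; [nra|]. assert (0 <= (vp*vq + vp + vq) * (up*up + uq*uq)) by (apply Rmult_le_pos; lra). lra. }
  lra.
Qed.

Lemma le_div_mul a b x : 0 < x -> a <= b / x -> a * x <= b.
Proof. intros Hx H. apply (Rmult_le_compat_r x) in H; [|lra]. unfold Rdiv in H.
  rewrite Rmult_assoc, Rinv_l, Rmult_1_r in H by lra. exact H. Qed.

Theorem proposition2
  (n m : nat) (ep en : nat -> nat) (B : nat -> nat -> R)
  (Xd Xdp Tc Efd : nat -> R) (etab Vb : nat -> R)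
  (* graph: well-formed, simple, connected *)
  (Hends : forall k, (k < m)%nat -> (ep k < n)%nat /\ (en k < n)%nat /\ ep k <> en k)
  (Hsimple : forall k k', (k < m)%nat -> (k' < m)%nat -> k <> k' ->
       ~ (ep k' = ep k /\ en k' = en k) /\ ~ (ep k' = en k /\ en k' = ep k))
  (Hconn : connected n m ep en)
  (* susceptances and reactances *)
  (HBsym : forall i j, B i j = B j i)
  (HBpos : forall k, (k < m)%nat -> B (ep k) (en k) > 0)
  (HBii : forall i, (i < n)%nat -> B i i < 0 /\
       Rabs (B i i) > rsum m (fun k => absD ep en i k * Rabs (B i (other ep en i k))))
  (HX : forall i, (i < n)%nat -> Xd i > Xdp i /\ Xdp i > 0)
  (HT : forall i, (i < n)%nat -> Tc i > 0)
  (* equilibrium *)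
  (Hetab : forall k, (k < m)%nat -> - (PI / 2) < etab k < PI / 2)
  (HVb : forall i, (i < n)%nat -> Vb i > 0)
  (Heq : forall i, (i < n)%nat -> EV n m ep en B Xd Xdp etab Vb i = Efd i)
  (Hstar : posdef n (Qmat m ep en B Xd Xdp etab Vb)) :
  (* W2 positive definite near (etab, Vb) *)
  (W2 n m ep en B Xd Xdp Efd etab etab Vb Vb = 0 /\
   exists delta, delta > 0 /\
     forall eta V : nat -> R,
       (forall k, (k < m)%nat -> Rabs (eta k - etab k) < delta) ->
       (forall i, (i < n)%nat -> Rabs (V i - Vb i) < delta) ->
       ((exists k, (k < m)%nat /\ eta k <> etab k) \/
        (exists i, (i < n)%nat /\ V i <> Vb i)) ->
       W2 n m ep en B Xd Xdp Efd eta etab V Vb > 0)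
  /\
  (* dissipation equality along solutions *)
  (forall (eta V v : R -> nat -> R),
     (forall t k, (k < m)%nat -> derivable_pt_lim (fun s => eta s k) t (v t k)) ->
     (forall t i, (i < n)%nat -> exists dV, derivable_pt_lim (fun s => V s i) t dV /\
          Tc i * dV = - EV n m ep en B Xd Xdp (eta t) (V t) i + Efd i) ->
     forall t,
       derivable_pt_lim (fun s => W2 n m ep en B Xd Xdp Efd (eta s) etab (V s) Vb) t
         (- rsum n (fun i => (EV n m ep en B Xd Xdp (eta t) (V t) i - Efd i) * / Tc i
                            * (EV n m ep en B Xd Xdp (eta t) (V t) i - Efd i))
          + rsum m (fun k => (gam ep en B (V t) k * sin (eta t k)
                              - gam ep en B Vb k * sin (etab k)) * (v t k - 0)))).
Proof.
  assert (Hne : forall k, (k < m)%nat -> ep k <> en k) by (intros k Hk; apply Hends; auto).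
  split.
{
  split.
  { unfold W2.
    rewrite (rsum_ext m (fun k => gam ep en B Vb k * sin (etab k) * (etab k - etab k)) (fun _ => 0)) by (intros; ring).
    rewrite (rsum_ext n (fun i => Efd i * (Vb i - Vb i)) (fun _ => 0)) by (intros; ring).
    rewrite !rsum_zero. ring. }
  assert (Hcos : forall k, (k < m)%nat -> cos (etab k) > 0).
  { intros k Hk. destruct (Hetab k Hk). apply cos_gt_0; lra. }
  assert (Hgam : forall k, (k < m)%nat -> gam ep en B Vb k > 0).
  { intros k Hk. destruct (Hends k Hk) as [Hp [Hq _]]. unfold gam.
    assert (Vb (ep k) > 0) by auto. assert (Vb (en k) > 0) by auto. assert (B (ep k) (en k) > 0) by auto.
    apply Rmult_gt_0_compat; [apply Rmult_gt_0_compat|]; auto. }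
  destruct (unif_posdef n _ Hstar) as [c [Hc Hcq]].
  set (Sg := rsum m (fun k => / (gam ep en B Vb k * cos (etab k)))).
  assert (HSg : 0 <= Sg).
  { apply rsum_nonneg. intros k Hk. left. apply Rinv_0_lt_compat. apply Rmult_lt_0_compat; [apply Hgam|apply Hcos]; auto. }
  set (al := / (1 + Sg)).
  assert (Hal : 0 < al) by (apply Rinv_0_lt_compat; lra).
  assert (Halk : forall k, (k < m)%nat -> al <= gam ep en B Vb k * cos (etab k)).
  { intros k Hk. assert (0 < gam ep en B Vb k * cos (etab k)) by (apply Rmult_lt_0_compat; [apply Hgam|apply Hcos]; auto).
    assert (/ (gam ep en B Vb k * cos (etab k)) <= Sg).
    { apply (term_le_rsum m (fun k => / (gam ep en B Vb k * cos (etab k)))); auto.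
      intros i Hi. left. apply Rinv_0_lt_compat. apply Rmult_lt_0_compat; [apply Hgam|apply Hcos]; auto. }
    unfold al. rewrite <- (Rinv_inv (gam ep en B Vb k * cos (etab k))).
    apply Rinv_le_contravar; [apply Rinv_0_lt_compat; auto| lra]. }
  set (tk := fun k => sin (etab k) / cos (etab k)).
  set (Gk := fun k => tk k * tk k * (2 * (/ Vb (ep k) * / Vb (ep k) + / Vb (en k) * / Vb (en k)))).
  assert (HGk : forall k, (k < m)%nat -> 0 <= Gk k).
  { intros k Hk. unfold Gk. apply Rmult_le_pos; [apply Rle_0_sqr|].
    assert (0 <= / Vb (ep k) * / Vb (ep k)) by apply Rle_0_sqr.
    assert (0 <= / Vb (en k) * / Vb (en k)) by apply Rle_0_sqr. lra. }
  set (Gb := rsum m Gk).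
  assert (HGb : 0 <= Gb) by (apply rsum_nonneg; auto).
  assert (HGkb : forall k, (k < m)%nat -> Gk k <= Gb) by (intros; apply term_le_rsum; auto).
  set (Kk := fun k => B (ep k) (en k) * (Vb (ep k) * Vb (en k) + Vb (ep k) + Vb (en k) + 1)).
  assert (HKk : forall k, (k < m)%nat -> 0 <= Kk k).
  { intros k Hk. destruct (Hends k Hk) as [Hp [Hq _]]. unfold Kk.
    assert (Vb (ep k) > 0) by auto. assert (Vb (en k) > 0) by auto. assert (B (ep k) (en k) > 0) by auto.
    apply Rmult_le_pos; [lra|]. assert (0 < Vb (ep k) * Vb (en k)) by (apply Rmult_lt_0_compat; lra). lra. }
  set (Kb := rsum m Kk).
  assert (HKb : 0 <= Kb) by (apply rsum_nonneg; auto).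
  assert (HKkb : forall k, (k < m)%nat -> Kk k <= Kb) by (intros; apply term_le_rsum; auto).
  set (M := INR m). assert (HM : 0 <= M) by apply pos_INR.
  set (lam := c / (c + 4 * (al * Gb * M))).
  assert (HaGM : 0 <= al * Gb * M) by (apply Rmult_le_pos; [apply Rmult_le_pos|]; lra).
  assert (Hlam : 0 < lam) by (apply Rdiv_lt_0_compat; lra).
  assert (Hlam1 : lam <= 1).
  { unfold lam. apply (Rmult_le_reg_r (c + 4 * (al * Gb * M))); [lra|]. unfold Rdiv.
    rewrite Rmult_assoc, Rinv_l by lra. lra. }
  assert (HlamG : lam * (al * Gb * M) <= c / 4).
  { unfold lam. apply (Rmult_le_reg_r (c + 4 * (al * Gb * M))); [lra|].
    replace (c / (c + 4 * (al * Gb * M)) * (al * Gb * M) * (c + 4 * (al * Gb * M))) with (c * (al * Gb * M)) by (field; lra).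
    assert (0 <= c * c) by apply Rle_0_sqr. lra. }
  set (LA := lam * al).
  assert (HLA : 0 < LA) by (apply Rmult_lt_0_compat; lra).
  set (dl := Rmin (1/2) (Rmin (LA / (8 * (Kb + 1))) (c / (8 * (Kb + 1) * (2 * M + 1))))).
  assert (Hdl : 0 < dl).
  { unfold dl. apply Rmin_glb_lt; [lra|]. apply Rmin_glb_lt; apply Rdiv_lt_0_compat; try lra.
    apply Rmult_lt_0_compat; lra. }
  assert (Hdl1 : dl <= 1/2) by apply Rmin_l.
  assert (Hdl2 : dl * Kb <= LA / 8).
  { assert (dl <= LA / (8 * (Kb + 1))) by (eapply Rle_trans; [apply Rmin_r| apply Rmin_l]).
    assert (dl * (8 * (Kb + 1)) <= LA).
    { apply le_div_mul; auto. lra. }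
    lra. }
  assert (Hdl3 : dl * Kb * (2 * M) <= c / 8).
  { assert (dl <= c / (8 * (Kb + 1) * (2 * M + 1))) by (eapply Rle_trans; [apply Rmin_r| apply Rmin_r]).
    assert (dl * (8 * (Kb + 1) * (2 * M + 1)) <= c).
    { apply le_div_mul; auto. apply Rmult_lt_0_compat; lra. }
    assert (0 <= dl * Kb * M) by (apply Rmult_le_pos; [apply Rmult_le_pos|]; lra).
    assert (0 <= dl * M) by (apply Rmult_le_pos; lra).
    assert (dl * (8 * (Kb + 1) * (2 * M + 1)) = 8 * (dl * Kb * (2 * M)) + 8 * (dl * Kb) + 16 * (dl * M) + 8 * dl) by ring.
    assert (0 <= dl * Kb) by (apply Rmult_le_pos; lra). lra. }
  exists dl. split; [lra|].
  intros eta V Heta HV Hnz.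
  rewrite (W2_decomp n m ep en B Xd Xdp Efd etab Vb eta V Hends HBsym HVb Hcos Heq).
  set (D := rsum m (fun k => (eta k - etab k) * (eta k - etab k))).
  set (U := rsum n (fun i => (V i - Vb i) * (V i - Vb i))).
  set (Z := rsum m (fun k => zk ep en V Vb eta etab k * zk ep en V Vb eta etab k)).
  set (P := rsum m (fun k => (V (ep k) - Vb (ep k)) * (V (ep k) - Vb (ep k)) + (V (en k) - Vb (en k)) * (V (en k) - Vb (en k)))).
  assert (HD : 0 <= D) by (apply rsum_nonneg; intros; apply Rle_0_sqr).
  assert (HU : 0 <= U) by (apply rsum_nonneg; intros; apply Rle_0_sqr).
  assert (HZ : 0 <= Z) by (apply rsum_nonneg; intros; apply Rle_0_sqr).
  assert (HP : 0 <= P).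
  { apply rsum_nonneg; intros. pose proof (Rle_0_sqr (V (ep i) - Vb (ep i))). pose proof (Rle_0_sqr (V (en i) - Vb (en i))).
    unfold Rsqr in *. lra. }
  assert (HPU : P <= M * (2 * U)).
  { apply rsum_const_le. intros k Hk. destruct (Hends k Hk) as [Hp [Hq _]].
    assert (forall j, (j < n)%nat -> (V j - Vb j) * (V j - Vb j) <= U).
    { intros j Hj. apply (term_le_rsum n (fun i => (V i - Vb i) * (V i - Vb i))); auto. intros; apply Rle_0_sqr. }
    pose proof (H _ Hp). pose proof (H _ Hq). lra. }
  assert (HQ : c * U <= qf n (Qmat m ep en B Xd Xdp etab Vb) (fun i => V i - Vb i)).
  { specialize (Hcq (fun i => V i - Vb i)). cbv beta in Hcq. fold U in Hcq. lra. }
  assert (HZ2 : al * Z <= rsum m (fun k => gam ep en B Vb k * cos (etab k) * (zk ep en V Vb eta etab k * zk ep en V Vb eta etab k))).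
  { unfold Z. rewrite <- rsum_scal. apply rsum_le. intros k Hk. apply Rmult_le_compat_r; [apply Rle_0_sqr|]. auto. }
  assert (HDZ : D <= 2 * Z + 2 * (Gb * P)).
  { unfold D, Z, P. rewrite <- rsum_scal, <- rsum_scal, <- rsum_scal, <- rsum_plus. apply rsum_le. intros k Hk.
    destruct (Hends k Hk) as [Hp [Hq _]].
    assert (Ed : eta k - etab k = zk ep en V Vb eta etab k - tk k * wk ep en V Vb k) by (unfold zk, tk; ring).
    rewrite Ed.
    assert (S1 : forall z w, (z-w)*(z-w) <= 2*(z*z) + 2*(w*w)).
    { intros z w. assert (0 <= (z+w)*(z+w)) by apply Rle_0_sqr. nra. }
    eapply Rle_trans; [apply S1|].
    assert (Vb (ep k) > 0) by auto. assert (Vb (en k) > 0) by auto.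
    set (up := V (ep k) - Vb (ep k)). set (uq := V (en k) - Vb (en k)).
    assert (Hw : wk ep en V Vb k * wk ep en V Vb k <=
       2 * (/ Vb (ep k) * / Vb (ep k) + / Vb (en k) * / Vb (en k)) * (up * up + uq * uq)).
    { unfold wk. fold up uq.
      replace (up / Vb (ep k) + uq / Vb (en k)) with (/ Vb (ep k) * up + / Vb (en k) * uq) by (field; lra).
      set (a := / Vb (ep k)). set (b := / Vb (en k)).
      assert (0 <= (a*up - b*uq) * (a*up - b*uq)) by apply Rle_0_sqr.
      assert (0 <= a*a*(uq*uq)) by (apply Rmult_le_pos; apply Rle_0_sqr).
      assert (0 <= b*b*(up*up)) by (apply Rmult_le_pos; apply Rle_0_sqr). nra. }
    assert (tk k * wk ep en V Vb k * (tk k * wk ep en V Vb k) <= Gk k * (up * up + uq * uq)).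
    { replace (tk k * wk ep en V Vb k * (tk k * wk ep en V Vb k)) with (tk k * tk k * (wk ep en V Vb k * wk ep en V Vb k)) by ring.
      apply Rle_trans with (tk k * tk k * (2 * (/ Vb (ep k) * / Vb (ep k) + / Vb (en k) * / Vb (en k)) * (up * up + uq * uq))).
      { apply Rmult_le_compat_l; [apply Rle_0_sqr| exact Hw]. }
      unfold Gk; right; ring. }
    assert (Gk k * (up * up + uq * uq) <= Gb * (up * up + uq * uq)).
    { apply Rmult_le_compat_r; auto. pose proof (Rle_0_sqr up). pose proof (Rle_0_sqr uq). unfold Rsqr in *. lra. }
    lra. }
  assert (HR : - (dl * Kb * (D + P)) <= rsum m (fun k => Rk ep en B V Vb eta etab k)).
  { assert (Rabs (rsum m (fun k => Rk ep en B V Vb eta etab k)) <= dl * Kb * (D + P)).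
    { eapply Rle_trans; [apply rsum_abs|].
      replace (dl * Kb * (D + P)) with (rsum m (fun k => dl * Kb * ((eta k - etab k) * (eta k - etab k) +
         ((V (ep k) - Vb (ep k)) * (V (ep k) - Vb (ep k)) + (V (en k) - Vb (en k)) * (V (en k) - Vb (en k)))))).
      2:{ unfold D, P. rewrite rsum_scal, rsum_plus. ring. }
      apply rsum_le. intros k Hk. destruct (Hends k Hk) as [Hp [Hq _]].
      assert (Vb (ep k) > 0) by auto. assert (Vb (en k) > 0) by auto. assert (B (ep k) (en k) > 0) by auto.
      assert (Hdk : Rabs (eta k - etab k) <= dl) by (left; auto).
      destruct (g_bounds (etab k) (eta k) dl Hdk ltac:(lra)) as [G1 G2].
      unfold Rk.
      eapply Rle_trans; [apply (Rk_core (B (ep k) (en k)) (Vb (ep k)) (Vb (en k)) (V (ep k) - Vb (ep k)) (V (en k) - Vb (en k))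
          (sin (etab k)) (gk etab eta k) (gk etab eta k - / 2 * cos (etab k) * ((eta k - etab k) * (eta k - etab k))) (eta k - etab k) dl); auto|].
      + lra.
      + left; auto.
      + left; auto.
      + apply Rabs_le. pose proof (SIN_bound (etab k)). lra.
      + fold (Kk k).
        assert (0 <= (eta k - etab k) * (eta k - etab k) + (V (ep k) - Vb (ep k)) * (V (ep k) - Vb (ep k)) + (V (en k) - Vb (en k)) * (V (en k) - Vb (en k))).
        { pose proof (Rle_0_sqr (eta k - etab k)). pose proof (Rle_0_sqr (V (ep k) - Vb (ep k))). pose proof (Rle_0_sqr (V (en k) - Vb (en k))). unfold Rsqr in *. lra. }
        rewrite Rplus_assoc in H2 |- *.
        apply Rmult_le_compat_r; auto. apply Rmult_le_compat_l; auto; lra. }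
    pose proof (abs_le_inv _ _ H). lra. }
  assert (HDU : 0 < D \/ 0 < U).
  { destruct Hnz as [[k [Hk Hne']]|[i [Hi Hne']]].
    - left. apply (rsum_pos m (fun k => (eta k - etab k) * (eta k - etab k)) k); auto.
      + intros; apply Rle_0_sqr.
      + assert (eta k - etab k <> 0) by lra. assert (0 < (eta k - etab k)²) by (apply Rlt_0_sqr; auto). exact H0.
    - right. apply (rsum_pos n (fun i => (V i - Vb i) * (V i - Vb i)) i); auto.
      + intros; apply Rle_0_sqr.
      + assert (V i - Vb i <> 0) by lra. assert (0 < (V i - Vb i)²) by (apply Rlt_0_sqr; auto). exact H0. }
  assert (F1 : LA * Z <= al * Z).
  { assert (0 <= al * Z) by (apply Rmult_le_pos; lra).
    replace (LA * Z) with (lam * (al * Z)) by (unfold LA; ring).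
    apply Rle_trans with (1 * (al * Z)); [apply Rmult_le_compat_r; lra| lra]. }
  assert (F2 : LA * D <= 2 * (LA * Z) + 2 * (LA * (Gb * P))).
  { assert (LA * D <= LA * (2 * Z + 2 * (Gb * P))) by (apply Rmult_le_compat_l; lra). lra. }
  assert (F3 : LA * (Gb * P) <= c / 2 * U).
  { assert (LA * (Gb * P) <= LA * (Gb * (M * (2 * U)))).
    { apply Rmult_le_compat_l; [lra|]. apply Rmult_le_compat_l; lra. }
    assert (LA * (Gb * (M * (2 * U))) = 2 * (lam * (al * Gb * M)) * U) by (unfold LA; ring).
    assert (2 * (lam * (al * Gb * M)) * U <= 2 * (c / 4) * U).
    { apply Rmult_le_compat_r; lra. }
    lra. }
  assert (F4 : dl * Kb * (D + P) <= LA / 8 * D + c / 8 * U).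
  { assert (dl * Kb * D <= LA / 8 * D) by (apply Rmult_le_compat_r; lra).
    assert (dl * Kb * P <= dl * Kb * (M * (2 * U))) by (apply Rmult_le_compat_l; [apply Rmult_le_pos|]; lra).
    assert (dl * Kb * (M * (2 * U)) = dl * Kb * (2 * M) * U) by ring.
    assert (dl * Kb * (2 * M) * U <= c / 8 * U) by (apply Rmult_le_compat_r; lra).
    lra. }
  assert (F5 : 0 < LA / 8 * D + c / 8 * U).
  { assert (0 <= LA * D) by (apply Rmult_le_pos; lra). assert (0 <= c * U) by (apply Rmult_le_pos; lra).
    destruct HDU. - assert (0 < LA * D) by (apply Rmult_lt_0_compat; lra). lra.
    - assert (0 < c * U) by (apply Rmult_lt_0_compat; lra). lra. }
  lra.
}
  intros eta V v Hv HV t.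
  set (vV := fun i => (- EV n m ep en B Xd Xdp (eta t) (V t) i + Efd i) / Tc i).
  assert (HVd : forall i, (i < n)%nat -> derivable_pt_lim (fun s => V s i) t (vV i)).
  { intros i Hi. destruct (HV t i Hi) as [dV [H1 H2]]. replace (vV i) with dV; auto.
    unfold vV. rewrite <- H2. field. specialize (HT i Hi). lra. }
  set (dg := fun k => (vV (ep k) * V t (en k) + V t (ep k) * vV (en k)) * B (ep k) (en k) * cos (eta t k)
                      + gam ep en B (V t) k * (- sin (eta t k) * v t k)).
  assert (HG : derivable_pt_lim (fun s => rsum m (fun k => gam ep en B (V s) k * cos (eta s k))) t (rsum m dg)).
  { apply (D_rsum m (fun k s => gam ep en B (V s) k * cos (eta s k))). intros k Hk.
    destruct (Hends k Hk) as [Hp [Hq _]]. unfold gam.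
    eapply D_mult; [eapply D_mult; [eapply D_mult; [apply HVd; auto| apply HVd; auto| reflexivity] | apply D_const; reflexivity | reflexivity]
       | eapply D_cos; [apply Hv; auto| reflexivity] | ].
    unfold dg, gam. ring. }
  assert (HS : derivable_pt_lim (fun s => rsum m (fun k => gam ep en B Vb k * sin (etab k) * (eta s k - etab k))) t
     (rsum m (fun k => gam ep en B Vb k * sin (etab k) * v t k))).
  { apply (D_rsum m (fun k s => gam ep en B Vb k * sin (etab k) * (eta s k - etab k))). intros k Hk.
    eapply D_mult; [apply D_const; reflexivity| eapply D_minus; [apply Hv; auto| apply D_const; reflexivity| reflexivity]|ring]. }
  assert (HE : derivable_pt_lim (fun s => rsum n (fun i => Efd i * (V s i - Vb i))) t (rsum n (fun i => Efd i * vV i))).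
  { apply (D_rsum n (fun i s => Efd i * (V s i - Vb i))). intros i Hi.
    eapply D_mult; [apply D_const; reflexivity| eapply D_minus; [apply HVd; auto| apply D_const; reflexivity| reflexivity]|ring]. }
  assert (HQ : derivable_pt_lim (fun s => rsum n (fun i => V s i * Fd B Xd Xdp i * V s i)) t
      (rsum n (fun i => 2 * (Fd B Xd Xdp i * vV i * V t i)))).
  { apply (D_rsum n (fun i s => V s i * Fd B Xd Xdp i * V s i)). intros i Hi.
    eapply D_mult; [eapply D_mult; [apply HVd; auto| apply D_const; reflexivity| reflexivity]| apply HVd; auto| ring]. }
  unfold W2.
  eapply D_minus; [eapply D_plus; [eapply D_minus; [eapply D_minus; [eapply D_plus; [eapply D_opp; [exact HG| reflexivity]
     | apply D_const; reflexivity| reflexivity] | exact HS | reflexivity] | exact HE | reflexivity]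
     | eapply D_mult; [apply D_const; reflexivity | exact HQ | reflexivity] | reflexivity] | apply D_const; reflexivity | ].
  assert (QE := quadE n m ep en B Xd Xdp (eta t) vV (V t) Hends HBsym).
  assert (E1 : rsum m dg = rsum m (fun k => B (ep k) (en k) * cos (eta t k) * (vV (ep k) * V t (en k) + vV (en k) * V t (ep k)))
       - rsum m (fun k => gam ep en B (V t) k * sin (eta t k) * v t k)).
  { rewrite <- rsum_minus. apply rsum_ext. intros; unfold dg; ring. }
  assert (E2 : rsum n (fun i => 2 * (Fd B Xd Xdp i * vV i * V t i)) = 2 * rsum n (fun i => Fd B Xd Xdp i * vV i * V t i)).
  { apply rsum_scal. }
  assert (E3 : rsum n (fun i => (EV n m ep en B Xd Xdp (eta t) (V t) i - Efd i) * / Tc i * (EV n m ep en B Xd Xdp (eta t) (V t) i - Efd i))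
     = - (rsum n (fun i => vV i * rsum n (fun j => Emat m ep en B Xd Xdp (eta t) i j * V t j)) - rsum n (fun i => Efd i * vV i))).
  { rewrite <- rsum_minus, <- rsum_opp. apply rsum_ext. intros i Hi. unfold vV, EV.
    specialize (HT i Hi). field. lra. }
  assert (E4 : rsum m (fun k => (gam ep en B (V t) k * sin (eta t k) - gam ep en B Vb k * sin (etab k)) * (v t k - 0))
     = rsum m (fun k => gam ep en B (V t) k * sin (eta t k) * v t k) - rsum m (fun k => gam ep en B Vb k * sin (etab k) * v t k)).
  { rewrite <- rsum_minus. apply rsum_ext. intros; ring. }
  rewrite E1, E2, E3, E4, QE. field.
Qed.
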